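(* Let $V_1,V_2$ be finite-dimensional Euclidean vector spaces and let $F\in\Lambda^2(V_1\oplus V_2)\cong\mathfrak{so}(V_1\oplus V_2)$ be a nonzero 2-form which vanishes on $V_1\wedge V_1$ and on $V_2\wedge V_2$ (i.e. $F\in V_1\otimes V_2\subset\Lambda^2(V_1\oplus V_2)$). Let $\mathfrak{g}\subset\Lambda^2(V_1\oplus V_2)$ be the Lie algebra generated by the brackets $[F,X\wedge Y]$ with $X\in V_1$, $Y\in V_2$. Then $$\mathfrak{g}=\mathfrak{so}(V_1)\oplus\mathfrak{so}(V_2),$$ unless $\dim V_1=\dim V_2=2$.
   Context: 2-forms on the Euclidean space $V=V_1\oplus V_2$ (orthogonal sum) are identified with skew-symmetric endomorphisms via $(X\wedge Y)(Z)=\langle X,Z\rangle Y-\langle Y,Z\rangle X$, and the bracket is the commutator of endomorphisms. $\mathfrak{so}(V_1)\oplus\mathfrak{so}(V_2)$ denotes the subalgebra $\Lambda^2V_1\oplus\Lambda^2V_2\subset\Lambda^2(V_1\oplus V_2)$. *)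

(* Defs.v *)
(* Euclidean space V = V1 (+) V2 modelled as column vectors
   'cV[R]_(p + q) with the standard inner product <u,v> = u^T v;
   V1 = first p coordinates, V2 = last q coordinates. *)
From HB Require Import structures.
From mathcomp Require Import all_boot all_order all_algebra.
Set Implicit Arguments. Unset Strict Implicit. Unset Printing Implicit Defensive.
Import Order.TTheory GRing.Theory Num.Theory.
Local Open Scope ring_scope.

Section Defs.
Variable R : rcfType.
Variable n : nat.

(* (X /\ Y)(Z) = <X,Z> Y - <Y,Z> X, i.e. the matrix Y X^T - X Y^T *)
Definition wedge (X Y : 'cV[R]_n) : 'M[R]_n := Y *m X^T - X *m Y^T.

Definition lie (A B : 'M[R]_n) : 'M[R]_n := A *m B - B *m A.

Definition skew_mx (A : 'M[R]_n) : Prop := A^T = - A.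

Definition subspace (P : 'M[R]_n -> Prop) : Prop :=
  P 0 /\ (forall (a : R) A B, P A -> P B -> P (a *: A + B)).

Definition lie_subalgebra (P : 'M[R]_n -> Prop) : Prop :=
  subspace P /\ (forall A B, P A -> P B -> P (lie A B)).

Definition span_of (S : 'M[R]_n -> Prop) (A : 'M[R]_n) : Prop :=
  forall P, subspace P -> (forall B, S B -> P B) -> P A.

Definition lie_generated (S : 'M[R]_n -> Prop) (A : 'M[R]_n) : Prop :=
  forall P, lie_subalgebra P -> (forall B, S B -> P B) -> P A.

Definition form2 (A : 'M[R]_n) (X Y : 'cV[R]_n) : R := ((A *m X)^T *m Y) 0 0.

End Defs.

Definition inV1 (R : rcfType) (p q : nat) (x : 'cV[R]_p) : 'cV[R]_(p + q) :=
  col_mx x 0.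
Definition inV2 (R : rcfType) (p q : nat) (y : 'cV[R]_q) : 'cV[R]_(p + q) :=
  col_mx 0 y.

(* so(V1) (+) so(V2) = Lambda^2 V1 (+) Lambda^2 V2 inside Lambda^2 (V1 (+) V2):
   the span of all X /\ X' (X,X' in V1) and Y /\ Y' (Y,Y' in V2). *)
Definition so12 (R : rcfType) (p q : nat) : 'M[R]_(p + q) -> Prop :=
  span_of (fun B => (exists x x' : 'cV[R]_p, B = wedge (inV1 q x) (inV1 q x'))
                 \/ (exists y y' : 'cV[R]_q, B = wedge (inV2 p y) (inV2 p y'))).

Definition gens (R : rcfType) (p q : nat) (F : 'M[R]_(p + q)) : 'M[R]_(p + q) -> Prop :=
  fun B => exists (x : 'cV[R]_p) (y : 'cV[R]_q),
    B = lie F (wedge (inV1 q x) (inV2 p y)).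

(* Main.v *)
Require Import Defs.
From HB Require Import structures.
From mathcomp Require Import all_boot all_order all_algebra.
From mathcomp Require Import ring.
From Stdlib Require Import Classical.
Import Order.TTheory GRing.Theory Num.Theory.
Local Open Scope ring_scope.
Set Implicit Arguments. Unset Strict Implicit. Unset Printing Implicit Defensive.

Definition dot (R : rcfType) n (u v : 'cV[R]_n) : R := (u^T *m v) 0 0.

Lemma mx11E (R : rcfType) n (u v : 'cV[R]_n) : u^T *m v = (dot u v)%:M.
Proof. by rewrite /dot {1}[u^T *m v]mx11_scalar. Qed.

Lemma dotC (R : rcfType) n (u v : 'cV[R]_n) : dot u v = dot v u.
Proof.
have -> : dot u v = (u^T *m v)^T 0 0 by rewrite mxE.
by rewrite trmx_mul trmxK.
Qed.

Lemma dotDl (R : rcfType) n (u v w : 'cV[R]_n) : dot (u + v) w = dot u w + dot v w.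
Proof. by rewrite /dot linearD mulmxDl mxE. Qed.

Lemma dotZl (R : rcfType) n a (u w : 'cV[R]_n) : dot (a *: u) w = a * dot u w.
Proof. by rewrite /dot linearZ -scalemxAl mxE. Qed.

Lemma dotDr (R : rcfType) n (u v w : 'cV[R]_n) : dot w (u + v) = dot w u + dot w v.
Proof. by rewrite dotC dotDl !(dotC w). Qed.

Lemma dotZr (R : rcfType) n a (u w : 'cV[R]_n) : dot w (a *: u) = a * dot w u.
Proof. by rewrite dotC dotZl dotC. Qed.

Lemma dot0l (R : rcfType) n (u : 'cV[R]_n) : dot 0 u = 0.
Proof. by rewrite /dot trmx0 mul0mx mxE. Qed.

Lemma dot0r (R : rcfType) n (u : 'cV[R]_n) : dot u 0 = 0.
Proof. by rewrite dotC dot0l. Qed.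

Lemma dotNl (R : rcfType) n (u w : 'cV[R]_n) : dot (- u) w = - dot u w.
Proof. by rewrite -scaleN1r dotZl mulN1r. Qed.

Lemma dotNr (R : rcfType) n (u w : 'cV[R]_n) : dot w (- u) = - dot w u.
Proof. by rewrite dotC dotNl dotC. Qed.

Lemma dotMl (R : rcfType) n (A : 'M[R]_n) (u v : 'cV[R]_n) :
  dot (A *m u) v = dot u (A^T *m v).
Proof. by rewrite /dot trmx_mul mulmxA. Qed.

Lemma dot_skew (R : rcfType) n (A : 'M[R]_n) (u v : 'cV[R]_n) :
  A^T = - A -> dot (A *m u) v = - dot u (A *m v).
Proof. by move=> sk; rewrite dotMl sk mulNmx dotNr. Qed.

Lemma dot_ge0 (R : rcfType) n (u : 'cV[R]_n) : 0 <= dot u u.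
Proof.
rewrite /dot mxE; apply: sumr_ge0 => i _; rewrite mxE -expr2; exact: sqr_ge0.
Qed.

Lemma dot_eq0 (R : rcfType) n (u : 'cV[R]_n) : dot u u = 0 -> u = 0.
Proof.
rewrite /dot mxE => /eqP; rewrite psumr_eq0; last first.
  by move=> i _; rewrite mxE -expr2 sqr_ge0.
move=> /allP H; apply/matrixP => i j; rewrite (ord1 j) !mxE.
have := H i (mem_index_enum i); rewrite mxE /= mulf_eq0 orbb => /eqP //.
Qed.

Lemma dot_neq0 (R : rcfType) n (u : 'cV[R]_n) : u != 0 -> dot u u != 0.
Proof. by apply: contraNneq => /dot_eq0 ->. Qed.

Lemma wedge_mul (R : rcfType) n (a b c : 'cV[R]_n) :
  wedge a b *m c = dot a c *: b - dot b c *: a.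
Proof.
by rewrite /wedge mulmxBl -!mulmxA !mx11E !mul_mx_scalar.
Qed.

Lemma wedgeC (R : rcfType) n (a b : 'cV[R]_n) : wedge b a = - wedge a b.
Proof. by rewrite /wedge opprB. Qed.

Lemma wedgexx (R : rcfType) n (a : 'cV[R]_n) : wedge a a = 0.
Proof. by rewrite /wedge subrr. Qed.

Lemma wedgeDl (R : rcfType) n (a b c : 'cV[R]_n) :
  wedge (a + b) c = wedge a c + wedge b c.
Proof.
rewrite /wedge linearD mulmxDr mulmxDl.
by apply/matrixP => i j; rewrite !mxE; ring.
Qed.

Lemma wedgeZl (R : rcfType) n k (a c : 'cV[R]_n) :
  wedge (k *: a) c = k *: wedge a c.
Proof. by rewrite /wedge linearZ /= -scalemxAr -scalemxAl scalerBr. Qed.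

Lemma wedgeDr (R : rcfType) n (a b c : 'cV[R]_n) :
  wedge c (a + b) = wedge c a + wedge c b.
Proof. by rewrite wedgeC wedgeDl opprD -!wedgeC. Qed.

Lemma wedgeZr (R : rcfType) n k (a c : 'cV[R]_n) :
  wedge c (k *: a) = k *: wedge c a.
Proof. by rewrite wedgeC wedgeZl -scalerN -wedgeC. Qed.

Lemma wedgeNl (R : rcfType) n (a c : 'cV[R]_n) : wedge (- a) c = - wedge a c.
Proof. by rewrite -scaleN1r wedgeZl scaleN1r. Qed.

Lemma wedgeNr (R : rcfType) n (a c : 'cV[R]_n) : wedge c (- a) = - wedge c a.
Proof. by rewrite -scaleN1r wedgeZr scaleN1r. Qed.

Lemma wedgeBl (R : rcfType) n (a b c : 'cV[R]_n) :
  wedge (a - b) c = wedge a c - wedge b c.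
Proof. by rewrite wedgeDl wedgeNl. Qed.

Lemma wedgeBr (R : rcfType) n (a b c : 'cV[R]_n) :
  wedge c (a - b) = wedge c a - wedge c b.
Proof. by rewrite wedgeDr wedgeNr. Qed.

Lemma wedge0l (R : rcfType) n (a : 'cV[R]_n) : wedge 0 a = 0.
Proof. by rewrite /wedge trmx0 mulmx0 mul0mx subrr. Qed.

Lemma wedge0r (R : rcfType) n (a : 'cV[R]_n) : wedge a 0 = 0.
Proof. by rewrite wedgeC wedge0l oppr0. Qed.

Lemma wedge_skew (R : rcfType) n (a b : 'cV[R]_n) : (wedge a b)^T = - wedge a b.
Proof. by rewrite /wedge linearB /= !trmx_mul !trmxK opprB. Qed.

Lemma lie_skew (R : rcfType) n (A : 'M[R]_n) (cc dd : 'cV[R]_n) :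
  A^T = - A -> lie A (wedge cc dd) = wedge (A *m cc) dd + wedge cc (A *m dd).
Proof.
move=> sk; rewrite /lie /wedge !trmx_mul sk !mulmxN !mulmxBr !mulmxBl !mulmxA.
rewrite ?mulmxN ?mulNmx.
move: (A *m dd *m cc^T) (A *m cc *m dd^T) (dd *m cc^T *m A) (cc *m dd^T *m A).
move=> X Y Z W; apply/matrixP => i j; rewrite !mxE; ring.
Qed.

Lemma lieW (R : rcfType) n (a b c d : 'cV[R]_n) :
  lie (wedge a b) (wedge c d) = dot a c *: wedge b d - dot b c *: wedge a d
    + dot a d *: wedge c b - dot b d *: wedge c a.
Proof.
rewrite (lie_skew c d (wedge_skew a b)) !wedge_mul.
rewrite wedgeBl wedgeBr !wedgeZl !wedgeZr.
move: (wedge b d) (wedge a d) (wedge c b) (wedge c a) => X Y Z W.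
apply/matrixP => i j; rewrite !mxE; ring.
Qed.


Ltac gen_wedges := repeat match goal with |- context [wedge ?a ?b] =>
  generalize (wedge a b); intro end.

Lemma lieDl (R : rcfType) n (A B C : 'M[R]_n) : lie (A + B) C = lie A C + lie B C.
Proof. rewrite /lie mulmxDl mulmxDr; apply/matrixP=> i j; rewrite !mxE; ring. Qed.
Lemma lieDr (R : rcfType) n (A B C : 'M[R]_n) : lie C (A + B) = lie C A + lie C B.
Proof. rewrite /lie mulmxDl mulmxDr; apply/matrixP=> i j; rewrite !mxE; ring. Qed.
Lemma lieZl (R : rcfType) n k (A C : 'M[R]_n) : lie (k *: A) C = k *: lie A C.
Proof. by rewrite /lie -scalemxAl -scalemxAr scalerBr. Qed.
Lemma lieZr (R : rcfType) n k (A C : 'M[R]_n) : lie C (k *: A) = k *: lie C A.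
Proof. by rewrite /lie -scalemxAl -scalemxAr scalerBr. Qed.
Lemma lieNl (R : rcfType) n (A C : 'M[R]_n) : lie (- A) C = - lie A C.
Proof. by rewrite -scaleN1r lieZl scaleN1r. Qed.
Lemma lieNr (R : rcfType) n (A C : 'M[R]_n) : lie C (- A) = - lie C A.
Proof. by rewrite -scaleN1r lieZr scaleN1r. Qed.
Lemma lieBl (R : rcfType) n (A B C : 'M[R]_n) : lie (A - B) C = lie A C - lie B C.
Proof. by rewrite lieDl lieNl. Qed.
Lemma lieBr (R : rcfType) n (A B C : 'M[R]_n) : lie C (A - B) = lie C A - lie C B.
Proof. by rewrite lieDr lieNr. Qed.

Lemma dotMlr (R : rcfType) m n (A : 'M[R]_(m, n)) (u : 'cV[R]_n) (v : 'cV[R]_m) :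
  dot (A *m u) v = dot u (A^T *m v).
Proof. by rewrite /dot trmx_mul mulmxA. Qed.

Section Closure.
End Closure.

Lemma g0 (R : rcfType) n (g : 'M[R]_n -> Prop) : lie_subalgebra g -> g 0.
Proof. by case=> [[]]. Qed.
Lemma gDZ (R : rcfType) n (g : 'M[R]_n -> Prop) a A B :
  lie_subalgebra g -> g A -> g B -> g (a *: A + B).
Proof. by case=> [[_ H] _]; apply: H. Qed.
Lemma gZ (R : rcfType) n (g : 'M[R]_n -> Prop) a A :
  lie_subalgebra g -> g A -> g (a *: A).
Proof. by move=> hg hA; rewrite -[_ *: _]addr0; apply: gDZ => //; apply: g0. Qed.
Lemma gD (R : rcfType) n (g : 'M[R]_n -> Prop) A B :
  lie_subalgebra g -> g A -> g B -> g (A + B).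
Proof. by move=> hg hA hB; rewrite -[A]scale1r; apply: gDZ. Qed.
Lemma gN (R : rcfType) n (g : 'M[R]_n -> Prop) A :
  lie_subalgebra g -> g A -> g (- A).
Proof. by move=> hg hA; rewrite -scaleN1r; apply: gZ. Qed.
Lemma gB (R : rcfType) n (g : 'M[R]_n -> Prop) A B :
  lie_subalgebra g -> g A -> g B -> g (A - B).
Proof. by move=> hg hA hB; apply: gD => //; apply: gN. Qed.
Lemma gL (R : rcfType) n (g : 'M[R]_n -> Prop) A B :
  lie_subalgebra g -> g A -> g B -> g (lie A B).
Proof. by case=> _ H; apply: H. Qed.

Lemma lemU (R : rcfType) n (g : 'M[R]_n -> Prop) (x0 z z' : 'cV[R]_n) :
  lie_subalgebra g -> dot x0 x0 != 0 ->
  g (wedge x0 z) -> g (wedge x0 z') -> g (wedge z z').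
Proof.
move=> hg nz h1 h2.
have -> : wedge z z' = (dot x0 x0)^-1 *: (lie (wedge x0 z) (wedge x0 z')
   + dot z x0 *: wedge x0 z' - dot x0 z' *: wedge x0 z).
  rewrite lieW wedgexx; gen_wedges.
  by apply/matrixP=> i j; rewrite !mxE; field.
apply: (gZ _ hg); apply: (gB hg); last exact: (gZ _ hg).
by apply: (gD hg); [exact: gL | exact: (gZ _ hg)].
Qed.




Record setting (R : rcfType) (n k1 k2 : nat) (F : 'M[R]_n) (M : 'M[R]_(k2,k1))
  (e1 : 'cV[R]_k1 -> 'cV[R]_n) (e2 : 'cV[R]_k2 -> 'cV[R]_n)
  (g : 'M[R]_n -> Prop) : Prop := Setting {
  e1lin : forall a u v, e1 (a *: u + v) = a *: e1 u + e1 v;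
  e2lin : forall a u v, e2 (a *: u + v) = a *: e2 u + e2 v;
  e1dot : forall u v, dot (e1 u) (e1 v) = dot u v;
  e2dot : forall u v, dot (e2 u) (e2 v) = dot u v;
  e12 : forall u v, dot (e1 u) (e2 v) = 0;
  Fsk : F^T = - F;
  F1 : forall x, F *m e1 x = e2 (M *m x);
  F2 : forall y, F *m e2 y = e1 (- (M^T *m y));
  Mnz : M != 0;
  gsub : lie_subalgebra g;
  ggen : forall x y, g (lie F (wedge (e1 x) (e2 y)))
}.

Section S.
Variables (R : rcfType) (n k1 k2 : nat) (F : 'M[R]_n) (M : 'M[R]_(k2,k1))
  (e1 : 'cV[R]_k1 -> 'cV[R]_n) (e2 : 'cV[R]_k2 -> 'cV[R]_n)
  (g : 'M[R]_n -> Prop).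
Hypothesis st : setting F M e1 e2 g.

Lemma e1_0 : e1 0 = 0.
Proof.
have h := e1lin st 1 0 0; rewrite !scale1r !addr0 in h.
by apply: (addrI (e1 0)); rewrite addr0 -h.
Qed.
Lemma e2_0 : e2 0 = 0.
Proof.
have h := e2lin st 1 0 0; rewrite !scale1r !addr0 in h.
by apply: (addrI (e2 0)); rewrite addr0 -h.
Qed.
Lemma e1D u v : e1 (u + v) = e1 u + e1 v.
Proof. by have := e1lin st 1 u v; rewrite !scale1r. Qed.
Lemma e1Z a u : e1 (a *: u) = a *: e1 u.
Proof. by have := e1lin st a u 0; rewrite !addr0 e1_0 addr0. Qed.
Lemma e1N u : e1 (- u) = - e1 u.
Proof. by rewrite -scaleN1r e1Z scaleN1r. Qed.
Lemma e1B u v : e1 (u - v) = e1 u - e1 v.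
Proof. by rewrite e1D e1N. Qed.
Lemma e2D u v : e2 (u + v) = e2 u + e2 v.
Proof. by have := e2lin st 1 u v; rewrite !scale1r. Qed.
Lemma e2Z a u : e2 (a *: u) = a *: e2 u.
Proof. by have := e2lin st a u 0; rewrite !addr0 e2_0 addr0. Qed.
Lemma e2N u : e2 (- u) = - e2 u.
Proof. by rewrite -scaleN1r e2Z scaleN1r. Qed.
Lemma e21 u v : dot (e2 u) (e1 v) = 0.
Proof. by rewrite dotC (e12 st). Qed.

Let hg := gsub st.

Lemma Gform x y : lie F (wedge (e1 x) (e2 y)) =
  wedge (e2 (M *m x)) (e2 y) + wedge (e1 x) (e1 (- (M^T *m y))).
Proof. by rewrite (lie_skew _ _ (Fsk st)) (F1 st) (F2 st). Qed.

Lemma gG x y : g (wedge (e2 (M *m x)) (e2 y) + wedge (e1 x) (e1 (- (M^T *m y)))).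
Proof. by rewrite -Gform; apply: (ggen st). Qed.

Lemma lie21 a b c d : lie (wedge (e2 a) (e2 b)) (wedge (e1 c) (e1 d)) = 0.
Proof. by rewrite lieW !e21 !scale0r !subr0 addr0. Qed.

Lemma exists_MT : exists y : 'cV_k2, M^T *m y != 0.
Proof.
have /matrix0Pn [i [j Hij]] := Mnz st.
exists (delta_mx i 0); rewrite -colE; apply/matrix0Pn; exists j, 0.
by rewrite !mxE.
Qed.

Lemma exists_M : exists x : 'cV_k1, M *m x != 0.
Proof.
have /matrix0Pn [i [j Hij]] := Mnz st.
exists (delta_mx j 0); rewrite -colE; apply/matrix0Pn; exists i, 0.
by rewrite !mxE.
Qed.

Definition full1 := forall x x', g (wedge (e1 x) (e1 x')).
Definition full2 := forall y y', g (wedge (e2 y) (e2 y')).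

Lemma lemA (x0 : 'cV_k1) : x0 != 0 -> M *m x0 = 0 -> full1.
Proof.
move=> nz0 Mx0; have [y0 ny0] := exists_MT.
set U0 := - (M^T *m y0).
have nU0 : dot U0 U0 != 0 by apply: dot_neq0; rewrite oppr_eq0.
have h0 : g (wedge (e1 x0) (e1 U0)).
  by have := gG x0 y0; rewrite Mx0 e2_0 wedge0l add0r.
have hU : dot U0 x0 = 0 by rewrite /U0 dotNl dotMlr trmxK Mx0 dot0r oppr0.
have hz z : g (wedge (e1 x0) (e1 z)).
  have := gL hg (gG z y0) h0; rewrite lieDl lie21 add0r => hl.
  have -> : wedge (e1 x0) (e1 z) = (dot U0 U0)^-1 *: (dot z U0 *: wedge (e1 x0) (e1 U0)
     - lie (wedge (e1 z) (e1 U0)) (wedge (e1 x0) (e1 U0))).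
    rewrite lieW !(e1dot st) hU wedgexx; gen_wedges.
    by apply/matrixP=> i j; rewrite !mxE; field.
  by apply: (gZ _ hg); apply: (gB hg) => //; apply: (gZ _ hg).
move=> z z'; apply: (lemU hg _ (hz z) (hz z')).
by rewrite (e1dot st) dot_neq0.
Qed.

Lemma lie12 a b c d : lie (wedge (e1 a) (e1 b)) (wedge (e2 c) (e2 d)) = 0.
Proof. by rewrite lieW !(e12 st) !scale0r !subr0 addr0. Qed.

Lemma lemC : full1 -> full2.
Proof.
move=> f1; have [x1 nx1] := exists_M.
have h y : g (wedge (e2 (M *m x1)) (e2 y)).
  have := gB hg (gG x1 y) (f1 x1 (- (M^T *m y))).
  by rewrite addrK.
move=> y y'; apply: (lemU hg _ (h y) (h y')).
by rewrite (e2dot st) dot_neq0.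
Qed.

Lemma lemB : (forall u : 'cV_k1, exists y : 'cV_k2, M^T *m y = u) ->
  forall x : 'cV_k1, wedge (e1 x) (e1 (M^T *m (M *m x))) != 0 -> full1.
Proof.
move=> surj x; set s := M^T *m (M *m x) => nw.
have hxs : g (wedge (e1 x) (e1 s)).
  have := gN hg (gG x (M *m x)); rewrite wedgexx add0r e1N wedgeNr opprK //.
have nx : x != 0.
  by apply: contraNneq nw => ->; rewrite e1_0 wedge0l.
have nxx : dot x x != 0 by apply: dot_neq0.
pose al := dot s x / dot x x.
pose b := s - al *: x.
have hab : wedge (e1 x) (e1 b) = wedge (e1 x) (e1 s).
  by rewrite /b e1B e1Z wedgeBr wedgeZr wedgexx scaler0 subr0.
have hxb : dot x b = 0.
  rewrite /b dotDr dotNr dotZr /al (dotC x s); field; exact: nxx.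
have nb : b != 0.
  by apply: contraNneq nw => hb; rewrite -hab hb e1_0 wedge0r.
have h c : g (wedge (e1 b) (e1 c)).
  have [y hy] := surj (- c).
  have := gL hg (gG x y) (hxs); rewrite hy opprK -hab lieDl lie21 add0r => hl.
  have -> : wedge (e1 b) (e1 c) = - (dot x x)^-1 *: (lie (wedge (e1 x) (e1 c)) (wedge (e1 x) (e1 b))
      + dot c x *: wedge (e1 x) (e1 b)).
    rewrite lieW !(e1dot st) hxb wedgexx [wedge (e1 c) (e1 b)]wedgeC; gen_wedges.
    by apply/matrixP=> i j; rewrite !mxE; field.
  by apply: (gZ _ hg); apply: (gD hg) => //; apply: (gZ _ hg); rewrite hab.
move=> z z'; apply: (lemU hg _ (h z) (h z')).
by rewrite (e1dot st) dot_neq0.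
Qed.

Lemma lie_lin2 (A B C D : 'M[R]_n) k l :
  lie (A - k *: B) (C - l *: D) = lie A C - l *: lie A D - k *: lie B C + (k * l) *: lie B D.
Proof. by rewrite lieBl !lieBr !lieZl !lieZr scalerA; apply/matrixP=> i j; rewrite !mxE; ring. Qed.
Lemma lemP (lam : R) : lam != 0 -> (forall x : 'cV_k1, M^T *m (M *m x) = lam *: x) ->
  forall x z x' z', g (lie (wedge (e1 x) (e1 z)) (wedge (e1 x') (e1 z'))).
Proof.
move=> nl hS.
have dotM a b : dot (M *m a) (M *m b) = lam * dot a b.
  by rewrite dotMlr hS dotZr.
have hH a b : g (wedge (e2 (M *m a)) (e2 (M *m b)) - lam *: wedge (e1 a) (e1 b)).
  by have := gG a (M *m b); rewrite hS e1N e1Z wedgeNr wedgeZr.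
move=> x z x' z'.
pose Hm a b := wedge (e2 (M *m a)) (e2 (M *m b)) - lam *: wedge (e1 a) (e1 b).
have -> : lie (wedge (e1 x) (e1 z)) (wedge (e1 x') (e1 z')) =
  (2 * lam ^+ 2)^-1 *: (lie (Hm x z) (Hm x' z') - lam *: (dot x x' *: Hm z z'
     - dot z x' *: Hm x z' + dot x z' *: Hm x' z - dot z z' *: Hm x' x)).
  rewrite /Hm lie_lin2 lie21 lie12 !lieW !(e2dot st) !dotM !(e1dot st).
  gen_wedges.
  apply/matrixP=> i j; rewrite !mxE; field.
  exact: nl.
apply: (gZ _ hg); apply: (gB hg); first by apply: (gL hg); apply: hH.
apply: (gZ _ hg); apply: (gB hg); last by apply: (gZ _ hg); apply: hH.
apply: (gD hg); last by apply: (gZ _ hg); apply: hH.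
by apply: (gB hg); apply: (gZ _ hg); apply: hH.
Qed.
End S.


Lemma wedgeE (R : rcfType) n (x y : 'cV[R]_n) a b :
  wedge x y a b = y a 0 * x b 0 - x a 0 * y b 0.
Proof. by rewrite /wedge !mxE !big_ord1 !mxE. Qed.

Lemma mx_eq0_col (R : rcfType) m n (A : 'M[R]_(m, n)) :
  (forall c : 'cV_n, A *m c = 0) -> A = 0.
Proof.
move=> h; apply/matrixP => i j.
by have := congr1 (fun B : 'cV_m => B i 0) (h (delta_mx j 0)); rewrite -colE !mxE.
Qed.

Lemma dot_delta (R : rcfType) n (i j : 'I_n) :
  dot (delta_mx i 0 : 'cV[R]_n) (delta_mx j 0) = (i == j)%:R.
Proof.
rewrite /dot mxE (bigD1 i) //= big1 ?addr0.
  by rewrite !mxE !eqxx !andbT /= mul1r.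
by move=> k nk; rewrite !mxE (negbTE nk) mul0r.
Qed.

Lemma scalar_of (R : rcfType) k (S : 'M[R]_k) (i0 : 'I_k) :
  (forall x : 'cV_k, wedge x (S *m x) = 0) -> forall x : 'cV_k, S *m x = S i0 i0 *: x.
Proof.
move=> h.
have off i j : i != j -> S j i = 0.
  move=> nij; have := congr1 (fun B : 'M_k => B j i) (h (delta_mx i 0)).
  rewrite wedgeE -colE !mxE !eqxx !andbT eq_sym (negbTE nij) /=.
  by rewrite mulr1 mul0r subr0 => ->.
have dg i j : S i i = S j j.
  have [->|nij] := eqVneq i j; first by [].
  have := congr1 (fun B : 'M_k => B i j) (h (delta_mx i 0 + delta_mx j 0)).
  rewrite wedgeE mulmxDr -!colE !mxE !eqxx !andbT (negbTE nij) eq_sym (negbTE nij) /=.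
  rewrite (off _ _ nij) (off j i); last by rewrite eq_sym.
  by move=> /eqP; rewrite !addr0 !add0r mulr1 mul1r subr_eq0 => /eqP.
have hS : S = (S i0 i0)%:M.
  apply/matrixP=> i j; rewrite !mxE; have [->|nij] := eqVneq i j.
    by rewrite mulr1n; apply: dg.
  by rewrite mulr0n (off j i) // eq_sym.
by move=> x; rewrite {1}hS mul_scalar_mx.
Qed.

Lemma inj_surj (R : rcfType) k1 k2 (M : 'M[R]_(k2, k1)) :
  (forall x : 'cV_k1, M *m x = 0 -> x = 0) -> forall u : 'cV_k1, exists y : 'cV_k2, M^T *m y = u.
Proof.
move=> inj; set S := M^T *m M.
have Sinj (x : 'cV_k1) : S *m x = 0 -> x = 0.
  move=> hx; apply: inj; apply: dot_eq0.
  by rewrite dotMlr mulmxA -/S hx dot0r.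
have Su : S \in unitmx.
  rewrite -unitmx_tr -row_free_unit -kermx_eq0; apply/eqP/matrixP => i j.
  set K := kermx S^T.
  have hr : row i K *m S^T = 0 by rewrite -row_mul mulmx_ker row0.
  have : (row i K)^T = 0.
    by apply: Sinj; rewrite -[S]trmxK -trmx_mul hr trmx0.
  move=> /(congr1 (fun B : 'cV_k1 => B j 0)); rewrite !mxE => ->.
  by [].
move=> u; exists (M *m (invmx S *m u)).
by rewrite mulmxA -/S mulmxA mulmxV // mul1mx.
Qed.
Lemma small_vec (R : rcfType) k (x x' : 'cV[R]_k) : (k <= 1)%N ->
  exists a b (d : 'cV[R]_k), x = a *: d /\ x' = b *: d.
Proof.
case: k x x' => [|[|//]] x x' _.
  by exists 0, 0, 0; rewrite scaler0; split; apply: flatmx0.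
exists (x 0 0), (x' 0 0), 1%:M.
by rewrite !scalemx1 -!mx11_scalar.
Qed.


Section S2.
Variables (R : rcfType) (n k1 k2 : nat) (F : 'M[R]_n) (M : 'M[R]_(k2,k1))
  (e1 : 'cV[R]_k1 -> 'cV[R]_n) (e2 : 'cV[R]_k2 -> 'cV[R]_n)
  (g : 'M[R]_n -> Prop).
Hypothesis st : setting F M e1 e2 g.
Let hg := gsub st.

Lemma e1_inj u : e1 u = 0 -> u = 0.
Proof. by move=> h; apply: dot_eq0; rewrite -(e1dot st) h dot0l. Qed.

Lemma wedge_e1 a b c : wedge (e1 a) (e1 b) *m e1 c = e1 (wedge a b *m c).
Proof. by rewrite !wedge_mul !(e1dot st) (e1B st) !(e1Z st). Qed.

Lemma wedge_e1_eq0 a b : wedge (e1 a) (e1 b) = 0 -> wedge a b = 0.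
Proof.
move=> h; apply: mx_eq0_col => c; apply: e1_inj.
by rewrite -wedge_e1 h mul0mx.
Qed.


Lemma small1 : (k1 <= 1)%N -> full1 e1 g.
Proof.
move=> hk x x'; have [a [b [d [-> ->]]]] := small_vec x x' hk.
rewrite !(e1Z st) wedgeZl wedgeZr wedgexx !scaler0; exact: g0 hg.
Qed.

Lemma perfect_fin : (2 < k1)%N ->
  (forall x z x' z', g (lie (wedge (e1 x) (e1 z)) (wedge (e1 x') (e1 z')))) ->
  full1 e1 g.
Proof.
move=> hk hP.
pose E (j : 'I_k1) := e1 (delta_mx j 0).
have dE i j : dot (E i) (E j) = (i == j)%:R by rewrite (e1dot st) dot_delta.
pose i0 : 'I_k1 := Ordinal (ltn_trans (isT : (0 < 2)%N) hk).
pose i1 : 'I_k1 := Ordinal (ltn_trans (isT : (1 < 2)%N) hk).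
pose i2 : 'I_k1 := Ordinal hk.
have hj j : g (wedge (E i0) (E j)).
  have [->|nj] := eqVneq j i0; first by rewrite wedgexx; exact: g0 hg.
  pose kk := if j == i1 then i2 else i1.
  have nk0 : (i0 == kk) = false by rewrite /kk; case: ifP.
  have nkj : (kk == j) = false.
    rewrite /kk; case: ifP => [/eqP -> //|]; by rewrite eq_sym => ->.
  have nj0 : (i0 == j) = false by rewrite eq_sym; apply/negbTE.
  have := gN hg (hP (delta_mx i0 0) (delta_mx kk 0) (delta_mx kk 0) (delta_mx j 0)).
  rewrite -/(E i0) -/(E kk) -/(E j) lieW !dE nk0 nkj nj0 eqxx !scale0r.
  by rewrite scale1r !subr0 add0r addr0 opprK.
have hz z : g (wedge (E i0) (e1 z)).
  have -> : z = \sum_(j < k1) z j 0 *: delta_mx j 0.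
    by rewrite {1}(matrix_sum_delta z); apply: eq_bigr => j _; rewrite big_ord1.
  elim: (index_enum _) => [|j s IH]; first by rewrite big_nil (e1_0 st) wedge0r; exact: g0 hg.
  rewrite big_cons (e1D st) (e1Z st) wedgeDr wedgeZr.
  by apply: (gD hg _ IH); apply: (gZ _ hg); apply: hj.
move=> x x'; apply: (lemU hg _ (hz x) (hz x')).
by rewrite dE eqxx oner_neq0.
Qed.

Lemma side : k1 != 2 -> full1 e1 g /\ full2 e2 g.
Proof.
move=> k2n.
suff f1 : full1 e1 g by split => //; exact: (lemC st f1).
case: (leqP k1 1) => [h1|hk]; first exact: small1.
have hk3 : (2 < k1)%N by rewrite ltn_neqAle eq_sym k2n hk.
case: (classic (exists x0 : 'cV_k1, x0 != 0 /\ M *m x0 = 0)) => [[x0 [nz h0]]|nker].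
  exact: (lemA st nz h0).
have inj (x : 'cV_k1) : M *m x = 0 -> x = 0.
  move=> hx; apply/eqP; apply: contraT => nz; exfalso; apply: nker; by exists x.
have surj := inj_surj inj.
case: (classic (exists x : 'cV_k1, wedge (e1 x) (e1 (M^T *m (M *m x))) != 0)) => [[x hx]|nw].
  exact: (lemB st surj hx).
have hw (x : 'cV_k1) : wedge x (M^T *m M *m x) = 0.
  rewrite -mulmxA; apply: wedge_e1_eq0; apply/eqP; apply: contraT => h; exfalso; apply: nw; by exists x.
pose i0 : 'I_k1 := Ordinal (ltn_trans (isT : (0 < 2)%N) hk3).
have hS := scalar_of i0 hw.
have nl : (M^T *m M) i0 i0 != 0.
  apply/eqP => hl; have := hS (delta_mx i0 0); rewrite hl scale0r => h.
  have hd : M *m (delta_mx i0 0 : 'cV_k1) = 0.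
    by apply: dot_eq0; rewrite dotMlr mulmxA h dot0r.
  have /matrixP /(_ i0 0) := inj _ hd.
  by rewrite !mxE !eqxx /= => /eqP; rewrite oner_eq0.
apply: (perfect_fin hk3); apply: (lemP st nl) => x; by rewrite mulmxA hS.
Qed.
End S2.


Section Blocks.
Variables (R : rcfType) (p q : nat).

Lemma dot_col (a c : 'cV[R]_p) (b d : 'cV[R]_q) :
  dot (col_mx a b) (col_mx c d) = dot a c + dot b d.
Proof. by rewrite /dot tr_col_mx mul_row_col mxE. Qed.

Lemma wedge11 (a b : 'cV[R]_p) :
  wedge (inV1 q a) (inV1 q b) = block_mx (wedge a b) 0 0 0.
Proof.
rewrite /wedge /inV1 !tr_col_mx !mul_col_row !trmx0 !mulmx0 !mul0mx.
by rewrite opp_block_mx add_block_mx !subrr.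
Qed.

Lemma wedge22 (a b : 'cV[R]_q) :
  wedge (inV2 p a) (inV2 p b) = block_mx 0 0 0 (wedge a b).
Proof.
rewrite /wedge /inV2 !tr_col_mx !mul_col_row !trmx0 !mulmx0 !mul0mx.
by rewrite opp_block_mx add_block_mx !subrr.
Qed.

Lemma Fdecomp (F : 'M[R]_(p + q)) :
  skew_mx F ->
  (forall x x' : 'cV[R]_p, form2 F (inV1 q x) (inV1 q x') = 0) ->
  (forall y y' : 'cV[R]_q, form2 F (inV2 p y) (inV2 p y') = 0) ->
  (forall x, F *m inV1 q x = inV2 p (dlsubmx F *m x)) /\
  (forall y, F *m inV2 p y = inV1 q (- ((dlsubmx F)^T *m y))).
Proof.
move=> sk h1 h2.
have e1 x : F *m inV1 q x = col_mx (ulsubmx F *m x) (dlsubmx F *m x).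
  by rewrite -{1}(submxK F) /inV1 mul_block_col !mulmx0 !addr0.
have e2 y : F *m inV2 p y = col_mx (ursubmx F *m y) (drsubmx F *m y).
  by rewrite -{1}(submxK F) /inV2 mul_block_col !mulmx0 !add0r.
have A0 : ulsubmx F = 0.
  apply: mx_eq0_col => x; apply: dot_eq0.
  have := h1 x (ulsubmx F *m x); rewrite /form2 -/(dot _ _) e1 /inV1 dot_col dot0r addr0.
  by [].
have D0 : drsubmx F = 0.
  apply: mx_eq0_col => y; apply: dot_eq0.
  have := h2 y (drsubmx F *m y); rewrite /form2 -/(dot _ _) e2 /inV2 dot_col dot0r add0r.
  by [].
split=> [x|y]; first by rewrite e1 A0 mul0mx.
rewrite e2 D0 mul0mx; congr col_mx.
set w := ursubmx F *m y + (dlsubmx F)^T *m y.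
have : dot w w = 0.
  have := dot_skew (inV2 p y) (inV1 q w) sk.
  rewrite e2 e1 D0 A0 mul0mx /inV1 /inV2 !dot_col dot0l dot0r !addr0 add0r.
  by rewrite /w dotDl [dot ((dlsubmx F)^T *m y) _]dotMlr trmxK => ->; rewrite addNr.
by move=> /dot_eq0 /eqP; rewrite /w addr_eq0 => /eqP.
Qed.
End Blocks.


Lemma lg_sub (R : rcfType) n (S : 'M[R]_n -> Prop) : lie_subalgebra (lie_generated S).
Proof.
split; first split.
- by move=> P [[P0 _] _] _.
- move=> a A B hA hB P hP hS; case: (hP) => [[_ hD] _].
  by apply: hD; [apply: hA | apply: hB].
- move=> A B hA hB P hP hS; case: (hP) => _ hL.
  by apply: hL; [apply: hA | apply: hB].
Qed.

Lemma lg_gen (R : rcfType) n (S : 'M[R]_n -> Prop) B : S B -> lie_generated S B.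
Proof. by move=> hB P _ hS; apply: hS. Qed.

Lemma span_sub (R : rcfType) n (S : 'M[R]_n -> Prop) : subspace (span_of S).
Proof.
split.
- by move=> P [P0 _] _.
- move=> a A B hA hB P hP hS; case: (hP) => _ hD.
  by apply: hD; [apply: hA | apply: hB].
Qed.

Lemma span_gen (R : rcfType) n (S : 'M[R]_n -> Prop) B : S B -> span_of S B.
Proof. by move=> hB P _ hS; apply: hS. Qed.


Lemma sum_delta_mx (R : rcfType) k (f : 'I_k -> 'I_k -> R) :
  \sum_i \sum_j f i j *: (delta_mx i j : 'M[R]_k) = \matrix_(i, j) f i j.
Proof.
rewrite [RHS]matrix_sum_delta; apply: eq_bigr => i _; apply: eq_bigr => j _.
by rewrite mxE.
Qed.

Lemma skew_sum (R : rcfType) k (P : 'M[R]_k) : P^T = - P ->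
  P = \sum_i \sum_j (P i j / 2) *: wedge (delta_mx j 0) (delta_mx i 0).
Proof.
move=> sk.
have hw (i j : 'I_k) : wedge (delta_mx j 0) (delta_mx i 0) = delta_mx i j - delta_mx j i :> 'M[R]_k.
  by rewrite /wedge !trmx_delta !mul_delta_mx.
under eq_bigr do under eq_bigr do rewrite hw scalerBr.
under eq_bigr do rewrite sumrB.
rewrite sumrB sum_delta_mx exchange_big /= sum_delta_mx.
apply/matrixP=> a b; rewrite !mxE.
have : P b a = - P a b.
  by have := congr1 (fun A : 'M_k => A a b) sk; rewrite !mxE.
move=> ->; by field.
Qed.

Lemma sum_ind (R : rcfType) n k (S : 'M[R]_n -> Prop) (phi : 'M[R]_k -> 'M[R]_n)
  (I : Type) (s : seq I) (G : I -> 'M[R]_k) :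
  subspace S -> phi 0 = 0 -> (forall A B, phi (A + B) = phi A + phi B) ->
  (forall i, S (phi (G i))) -> S (phi (\sum_(i <- s) G i)).
Proof.
move=> [S0 SD] p0 pD hG; elim: s => [|i s IH]; first by rewrite big_nil p0.
by rewrite big_cons pD -[phi (G i)]scale1r; apply: SD.
Qed.

Section Main.
Variables (R : rcfType) (p q : nat) (F : 'M[R]_(p + q)).
Hypotheses (sk : skew_mx F) (Fnz : F <> 0)
  (h1 : forall x x' : 'cV[R]_p, form2 F (inV1 q x) (inV1 q x') = 0)
  (h2 : forall y y' : 'cV[R]_q, form2 F (inV2 p y) (inV2 p y') = 0).

Let M := dlsubmx F.
Let FD := Fdecomp sk h1 h2.
Let FF1 := proj1 FD.
Let FF2 := proj2 FD.

Lemma Mnz0 : M != 0.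
Proof.
apply/eqP => M0; apply: Fnz; apply: mx_eq0_col => c.
have -> : c = col_mx (usubmx c) 0 + col_mx 0 (dsubmx c).
  by rewrite add_col_mx addr0 add0r vsubmxK.
rewrite mulmxDr.
have -> : F *m col_mx (usubmx c) 0 = 0 by rewrite (FF1 (usubmx c)) -/M M0 mul0mx /inV2 col_mx0.
by rewrite (FF2 (dsubmx c)) -/M M0 trmx0 mul0mx oppr0 /inV1 col_mx0 addr0.
Qed.

Let g := lie_generated (gens F).

Lemma st1 : setting F M (@inV1 R p q) (@inV2 R p q) g.
Proof.
split.
- by move=> a u v; rewrite /inV1 scale_col_mx add_col_mx scaler0 addr0.
- by move=> a u v; rewrite /inV2 scale_col_mx add_col_mx scaler0 addr0.
- by move=> u v; rewrite /inV1 dot_col dot0l addr0.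
- by move=> u v; rewrite /inV2 dot_col dot0l add0r.
- by move=> u v; rewrite /inV1 /inV2 dot_col dot0l dot0r addr0.
- exact: sk.
- exact: FF1.
- exact: FF2.
- exact: Mnz0.
- exact: lg_sub.
- by move=> x y; apply: lg_gen; exists x, y.
Qed.

Lemma st2 : setting F (- M^T) (@inV2 R p q) (@inV1 R p q) g.
Proof.
split.
- by move=> a u v; rewrite /inV2 scale_col_mx add_col_mx scaler0 addr0.
- by move=> a u v; rewrite /inV1 scale_col_mx add_col_mx scaler0 addr0.
- by move=> u v; rewrite /inV2 dot_col dot0l add0r.
- by move=> u v; rewrite /inV1 dot_col dot0l addr0.
- by move=> u v; rewrite /inV1 /inV2 dot_col dot0l dot0r addr0.
- exact: sk.
- by move=> y; rewrite FF2 mulNmx.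
- by move=> x; rewrite FF1 linearN /= trmxK mulNmx opprK.
- by rewrite oppr_eq0 trmx_eq0 Mnz0.
- exact: lg_sub.
- move=> y x; rewrite wedgeC lieNr; apply: (gN (lg_sub _)); apply: lg_gen; by exists x, y.
Qed.

Lemma fulls : (p <> 2 \/ q <> 2) ->
  full1 (@inV1 R p q) g /\ full1 (@inV2 R p q) g.
Proof.
case=> h.
- have hp : p != 2 by apply/eqP.
  by have [f1 f2] := side st1 hp; split; [exact: f1 | exact: f2].
- have hq : q != 2 by apply/eqP.
  by have [f2 f1] := side st2 hq; split; [exact: f1 | exact: f2].
Qed.

Definition Tblk (A : 'M[R]_(p + q)) :=
  exists (P : 'M[R]_p) (Q : 'M[R]_q), P^T = - P /\ Q^T = - Q /\ A = block_mx P 0 0 Q.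

Lemma T_sub : lie_subalgebra Tblk.
Proof.
split; first split.
- by exists 0, 0; split; [|split]; rewrite ?trmx0 ?oppr0 ?block_mx0.
- move=> a A B [P [Q [hP [hQ ->]]]] [P' [Q' [hP' [hQ' ->]]]].
  exists (a *: P + P'), (a *: Q + Q'); split; [|split].
  + by rewrite linearD linearZ /= hP hP' scalerN opprD.
  + by rewrite linearD linearZ /= hQ hQ' scalerN opprD.
  + by rewrite scale_block_mx add_block_mx !scaler0 !addr0.
- move=> A B [P [Q [hP [hQ ->]]]] [P' [Q' [hP' [hQ' ->]]]].
  exists (lie P P'), (lie Q Q'); split; [|split].
  + by rewrite /lie linearB /= !trmx_mul hP hP' !mulmxN !mulNmx !opprK opprB.
  + by rewrite /lie linearB /= !trmx_mul hQ hQ' !mulmxN !mulNmx !opprK opprB.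
  + rewrite /lie !mulmx_block !mulmx0 !mul0mx !addr0 !add0r opp_block_mx add_block_mx.
    by rewrite !subrr.
Qed.

Lemma T_gens B : gens F B -> Tblk B.
Proof.
move=> [x [y ->]]; rewrite (lie_skew _ _ sk) FF1 FF2 wedge11 wedge22.
exists (wedge x (- (M^T *m y))), (wedge (M *m x) y); split; [|split].
- exact: wedge_skew.
- exact: wedge_skew.
- by rewrite add_block_mx !addr0 add0r.
Qed.

Lemma T_so12 A : Tblk A -> so12 A.
Proof.
move=> [P [Q [hP [hQ ->]]]].
have -> : block_mx P 0 0 Q = block_mx P 0 0 0 + block_mx 0 0 0 Q.
  by rewrite add_block_mx !addr0 add0r.
have sp := span_sub (R:=R) (n:=(p+q)%N)
  (fun B => (exists x x' : 'cV[R]_p, B = wedge (inV1 q x) (inV1 q x'))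
                 \/ (exists y y' : 'cV[R]_q, B = wedge (inV2 p y) (inV2 p y'))).
rewrite /so12 -[block_mx P 0 0 0]scale1r; apply: sp.2.
  rewrite (skew_sum hP); apply: (@sum_ind R (p+q) p _ (fun X => block_mx X 0 0 0) _ _ _ sp).
  - by rewrite block_mx0.
  - by move=> X Y; rewrite add_block_mx !addr0.
  move=> i; apply: (@sum_ind R (p+q) p _ (fun X => block_mx X 0 0 0) _ _ _ sp).
  - by rewrite block_mx0.
  - by move=> X Y; rewrite add_block_mx !addr0.
  move=> j.
  have -> : block_mx ((P i j / 2) *: wedge (delta_mx j 0) (delta_mx i 0)) 0 0 0 =
     (P i j / 2) *: wedge (inV1 q (delta_mx j 0)) (inV1 q (delta_mx i 0)).
    by rewrite wedge11 scale_block_mx !scaler0.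
  rewrite -[_ *: _]addr0; apply: sp.2; last exact: sp.1.
  apply: span_gen; left; by exists (delta_mx j 0), (delta_mx i 0).
rewrite (skew_sum hQ); apply: (@sum_ind R (p+q) q _ (fun X => block_mx 0 0 0 X) _ _ _ sp).
- by rewrite block_mx0.
- by move=> X Y; rewrite add_block_mx !addr0.
move=> i; apply: (@sum_ind R (p+q) q _ (fun X => block_mx 0 0 0 X) _ _ _ sp).
- by rewrite block_mx0.
- by move=> X Y; rewrite add_block_mx !addr0.
move=> j.
have -> : block_mx 0 0 0 ((Q i j / 2) *: wedge (delta_mx j 0) (delta_mx i 0)) =
   (Q i j / 2) *: wedge (inV2 p (delta_mx j 0)) (inV2 p (delta_mx i 0)).
  by rewrite wedge22 scale_block_mx !scaler0.
rewrite -[_ *: _]addr0; apply: sp.2; last exact: sp.1.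
apply: span_gen; right; by exists (delta_mx j 0), (delta_mx i 0).
Qed.

Lemma main_sec : ~ (p = 2%N /\ q = 2%N) ->
  forall A : 'M[R]_(p + q), lie_generated (gens F) A <-> so12 A.
Proof.
move=> n22 A; split.
  by move=> hA; apply: T_so12; apply: hA; [exact: T_sub | exact: T_gens].
have hpq : p <> 2%N \/ q <> 2%N.
  case: (eqVneq p 2) => [hp|hp]; last by left; apply/eqP.
  by right => hq; apply: n22.
have [f1 f2] := fulls hpq.
move=> hA; apply: hA; first exact: (lg_sub _).1.
move=> B [[x [x' ->]]|[y [y' ->]]]; [exact: f1 | exact: f2].
Qed.
End Main.

Unset Implicit Arguments.
Theorem mainTheorem3 (R : rcfType) (p q : nat) (F : 'M[R]_(p + q)) :
  skew_mx F ->
  F <> 0 ->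
  (forall x x' : 'cV[R]_p, form2 F (inV1 q x) (inV1 q x') = 0) ->
  (forall y y' : 'cV[R]_q, form2 F (inV2 p y) (inV2 p y') = 0) ->
  ~ (p = 2%N /\ q = 2%N) ->
  forall A : 'M[R]_(p + q), lie_generated (gens F) A <-> so12 A.
Proof. by move=> sk Fnz h1 h2; apply: main_sec. Qed.
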